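(* Let $G=(\Gamma,s)$ be a connected rooted graph with $\tilde V\neq\emptyset$. Every $p\in\mathrm{PF}(G)$ admits a prime decomposition, i.e. an ordered set partition $(A_1,\dots,A_k)$ of $\tilde V$ into nonempty blocks such that for every $i\in[k]$, the function $p^{A_i}:A_i\to\mathbb{Z}$ defined by $p^{A_i}(v)=p(v)-\deg^{A_1\cup\dots\cup A_{i-1}}(v)$ belongs to $\mathrm{PPF}(G^{A_i})$.
   Context: $\mathbb{N}=\{1,2,\dots\}$. A rooted graph $G=(\Gamma,s)$ is a finite undirected multigraph without loops with a distinguished vertex $s$ (the sink), possibly disconnected; $V$ is its vertex set and $\tilde V=V\setminus\{s\}$. $\mathrm{mult}(vw)$ is the number of edges between $v,w$; for $A\subseteq V$, $\deg^A(v)=\sum_{w\in A}\mathrm{mult}(vw)$. A $G$-parking function is a function $p:\tilde V\to\mathbb{N}$ such that for every nonempty $S\subseteq\tilde V$ there exists $v\in S$ with $p(v)\le\deg^{V\setminus S}(v)$; $\mathrm{PF}(G)$ is their set. For $A\subseteq\tilde V$, $G^A$ is the induced subgraph on $A\cup\{s\}$ rooted at $s$. For an ordered pair $(A,B)$ of nonempty disjoint sets with $A\cup B=\tilde V$ and $p\in\mathrm{PF}(G)$, $p^A(v)=p(v)$ for $v\in A$ and $p^B(v)=p(v)-\deg^A(v)$ for $v\in B$; $p$ is decomposable w.r.t. $(A,B)$ if $p^A\in\mathrm{PF}(G^A)$ and $p^B\in\mathrm{PF}(G^B)$. $p$ is prime if it is decomposable w.r.t. no such $(A,B)$ (in particular,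 if $|\tilde V|=1$ every parking function is prime). $\mathrm{PPF}(G)$ is the set of prime $G$-parking functions. *)

(* Defs.v *)
From mathcomp Require Import all_boot all_order all_algebra.
Set Implicit Arguments. Unset Strict Implicit. Unset Printing Implicit Defensive.
Import Order.TTheory GRing.Theory Num.Theory.

(* A rooted loopless multigraph is given by a finite vertex type V,
   a multiplicity function mult : V -> V -> nat (symmetric, zero on the
   diagonal; these are hypotheses of the theorem) and a sink s : V. *)

Section Defs.
Variables (V : finType) (mult : V -> V -> nat) (s : V).

Definition degA (A : {set V}) (v : V) : nat := \sum_(w in A) mult v w.

Definition Vt : {set V} := [set v | v != s].

Definition adj : rel V := fun v w => 0 < mult v w.
Definition connectedG : Prop := forall v w : V, connect adj v w.

(* Parking functions of the induced rooted subgraph G^W on W ∪ {s}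
   (W ⊆ \tilde V); a function W -> N is represented by q : V -> int whose
   values outside W are irrelevant.  For W = Vt this is PF(G). *)
Definition is_PF (W : {set V}) (q : V -> int) : Prop :=
  (forall v, v \in W -> (1 <= q v)%R) /\
  (forall S : {set V}, S \subset W -> S != set0 ->
     exists2 v, v \in S & (q v <= (degA ((s |: W) :\: S) v)%:Z)%R).

Definition decomposable (W A B : {set V}) (q : V -> int) : Prop :=
  is_PF A q /\ is_PF B (fun v => q v - (degA A v)%:Z)%R.

Definition is_PPF (W : {set V}) (q : V -> int) : Prop :=
  is_PF W q /\
  forall A B : {set V}, A != set0 -> B != set0 -> [disjoint A & B] ->
     A :|: B = W -> ~ decomposable W A B q.

Definition ordered_partition (W : {set V}) (As : seq {set V}) : Prop :=
  (forall i, i < size As -> nth set0 As i != set0) /\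
  (forall i j, i < size As -> j < size As -> i != j ->
     [disjoint nth set0 As i & nth set0 As j]) /\
  \bigcup_(i < size As) nth set0 As i = W.

Definition prime_decomposition (p : V -> int) (As : seq {set V}) : Prop :=
  ordered_partition Vt As /\
  forall i, i < size As ->
    is_PPF (nth set0 As i)
      (fun v => p v - (degA (\bigcup_(j < i) nth set0 As j) v)%:Z)%R.

End Defs.

(* Main.v *)
Require Import Defs.
From mathcomp Require Import all_boot all_order all_algebra.
From Stdlib Require Import Classical FunctionalExtensionality.
From mathcomp Require Import zify.
Import GRing.Theory Num.Theory.

Section Aux.
Variables (V : finType) (mult : V -> V -> nat) (s : V).

Definition pre (As : seq {set V}) (i : nat) : {set V} :=
  \bigcup_(j < i) nth set0 As j.

Lemma degA_set0 v : degA mult set0 v = 0%N.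
Proof. by rewrite /degA big_set0. Qed.

Lemma degA_U (A B : {set V}) v : [disjoint A & B] ->
  degA mult (A :|: B) v = (degA mult A v + degA mult B v)%N.
Proof. by move=> d; rewrite /degA (eq_bigl [predU A & B]) ?bigU // => x; rewrite !inE. Qed.

Lemma pre_cat_l (As Bs : seq {set V}) i : i <= size As -> pre (As ++ Bs) i = pre As i.
Proof.
move=> hi; apply: eq_bigr => j _; rewrite nth_cat.
by rewrite (leq_trans (ltn_ord j) hi).
Qed.

Lemma pre_cat_r (As Bs : seq {set V}) k :
  pre (As ++ Bs) (size As + k) = pre As (size As) :|: pre Bs k.
Proof.
rewrite /pre big_split_ord /=; congr (_ :|: _); apply: eq_bigr => j _.
  by rewrite nth_cat /= ltn_ord.
by rewrite nth_cat /= ltnNge leq_addr /= addKn.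
Qed.

Lemma nth_sub_pre (As : seq {set V}) i : i < size As -> nth set0 As i \subset pre As (size As).
Proof. move=> hi; exact: (bigcup_sup (Ordinal hi)). Qed.

Lemma gen n : forall (W : {set V}) (q : V -> int), #|W| <= n ->
  is_PF mult s W q ->
  exists As, ordered_partition W As /\
    forall i, i < size As ->
      is_PPF mult s (nth set0 As i)
        (fun v => q v - (degA mult (pre As i) v)%:Z)%R.
Proof.
elim: n => [|n IH] W q hW hq.
  exists [::]; split; last by [].
  split; first by [].
  split; first by [].
  rewrite big_ord0; apply/esym/eqP; by rewrite -cards_eq0 -leqn0.
have [W0|Wn0] := eqVneq W set0.
  exists [::]; split; last by [].
  split; first by [].
  split; first by [].
  by rewrite big_ord0.
have [hP|hN] := classic (is_PPF mult s W q).
  exists [:: W]; split.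
    split; first by case.
    split; first by case=> [|[]] [|[]].
    by rewrite big_ord1.
  case=> [|//] _ /=.
  have -> : (fun v => q v - (degA mult (pre [:: W] 0) v)%:Z)%R = q.
    by apply: functional_extensionality => v; rewrite /pre big_ord0 degA_set0 subr0.
  exact: hP.
have [A [B [An0 Bn0 dAB UAB dec]]] :
  exists A B : {set V}, [/\ A != set0, B != set0, [disjoint A & B],
     A :|: B = W & decomposable mult s W A B q].
  apply: NNPP => H; apply: hN; split; first exact: hq.
  move=> A B a b d u dc; apply: H; exists A, B; by split.
case: dec => PA PB.
have cardW : #|W| = (#|A| + #|B|)%N.
  by rewrite -UAB cardsU (disjoint_setI0 dAB) cards0 subn0.
have cA : #|A| <= n.
  have : 0 < #|B| by rewrite card_gt0.
  move: hW; rewrite cardW. lia.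
have cB : #|B| <= n.
  have : 0 < #|A| by rewrite card_gt0.
  move: hW; rewrite cardW. lia.
have [As [[AsN [AsD AsU]] AsP]] := IH A q cA PA.
have [Bs [[BsN [BsD BsU]] BsP]] := IH B _ cB PB.
have sA i : i < size As -> nth set0 As i \subset A.
  by move=> hi; rewrite -AsU; exact: nth_sub_pre.
have sB i : i < size Bs -> nth set0 Bs i \subset B.
  by move=> hi; rewrite -BsU; exact: nth_sub_pre.
exists (As ++ Bs); split.
  split.
    move=> i; rewrite size_cat nth_cat; case: (ltnP i (size As)) => hi hi2.
      exact: AsN.
    apply: BsN; lia.
  split.
    move=> i j; rewrite size_cat !nth_cat.
    case: (ltnP i (size As)) => hi; case: (ltnP j (size As)) => hj hi2 hj2 hij.
    - exact: AsD.
    - apply: (disjointWl (sA _ hi)); apply: (disjointWr (sB (j - size As) _)).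
        lia.
      exact: dAB.
    - apply: (disjointWl (sB (i - size As) _)); first lia.
      apply: (disjointWr (sA _ hj)); rewrite disjoint_sym; exact: dAB.
    - apply: BsD; try lia.
  have := pre_cat_r As Bs (size Bs); rewrite -size_cat /pre => ->.
  by rewrite AsU BsU.
move=> i; rewrite size_cat nth_cat; case: (ltnP i (size As)) => hi hi2.
  rewrite pre_cat_l; [exact: AsP | exact: ltnW].
have e : i = (size As + (i - size As))%N by lia.
have hk : i - size As < size Bs by lia.
have := BsP _ hk.
have -> : (fun v => q v - (degA mult (pre (As ++ Bs) i) v)%:Z)%R =
  (fun v => (q v - (degA mult A v)%:Z) - (degA mult (pre Bs (i - size As)) v)%:Z)%R.
  apply: functional_extensionality => v.
  rewrite {1}e pre_cat_r.
  have -> : pre As (size As) = A by exact: AsU.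
  rewrite degA_U.
    by rewrite PoszD opprD addrA.
  apply: (disjointWr _ dAB); rewrite -BsU /pre.
  apply/bigcupsP => j _; apply: (bigcup_sup (Ordinal (ltn_trans (ltn_ord j) hk))).
  by [].
by [].
Qed.

End Aux.

Theorem proposition2p5 (V : finType) (mult : V -> V -> nat) (s : V)
  (mult_sym : forall v w, mult v w = mult w v)
  (mult_loopless : forall v, mult v v = 0)
  (Hconn : connectedG mult)
  (Hnonempty : exists v : V, v != s)
  (p : V -> int) (Hp : is_PF mult s (Vt s) p) :
  exists As : seq {set V}, prime_decomposition mult s p As.
Proof.
have [As [h1 h2]] := @gen V mult s #|Vt s| (Vt s) p (leqnn _) Hp.
exists As; split; [exact: h1 | exact: h2].
Qed.
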